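(* Let $K$ be a Kan complex, $v\in K_0$ a vertex and $n\geq1$. Then the homotopy monoid $\tau_n(\mathrm{th}_0(K),v)$ (with the multiplication defined in the context) is a group, and it coincides, as a group, with the simplicial homotopy group $\pi_n(K,v)$.
   Context: A stratified simplicial set is a pair $(X,tX)$ where $X$ is a simplicial set and $tX$ is a set of simplices of $X$ (thin simplices) containing all degenerate simplices and no $0$-simplices; stratified maps are simplicial maps preserving thin simplices. For a Kan complex $K$, $\mathrm{th}_0(K)$ denotes the stratified simplicial set $(K,\bigcup_{m\ge1}K_m)$ (all simplices of positive dimension thin); it is a weak complicial set. For $n\ge1$, $\Delta[n]_t$ is $\Delta[n]$ with thin simplices the degenerate ones and $\mathrm{Id}_{[n]}$. For $k\in[n]$, $\Delta^k[n]$ is $\Delta[n]$ with thin simplices the degenerate ones and all $\alpha:[m]\to[n]$ with $\{k-1,k,k+1\}\cap[n]\subset\mathrm{Im}(\alpha)$. The product $X\circledast Y$ has underlying simplicial set $X\times Y$, with $(x,y)$ thin iff $x$ and $y$ are thin. For stratified maps $f,g:A\to X$ and an inclusion $B\hookrightarrow A$ with $f|_B=g|_B$, $f\sim_B g$ means there is a stratified map $H:A\circledast\Delta[1]_t\to X$ with $H|_{A\times\{0\}}=f$, $H|_{A\times\{1\}}=g$ and $H|_{B\circledast\Delta[1]_t}=f|_B\circ\mathrm{proj}_B$; $n$-simplices are regarded as stratified maps from $\Delta[n]$ with only degenerate simplices thin. For a weak complicial set $X$, vertex $x$, and $n\ge1$, $\tau_n(X,x)$ is the set of $\sim_{\partial\Delta[n]}$-classes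 of $n$-simplices $\alpha$ whose restriction to $\partial\Delta[n]$ is constant at $x$, with multiplication $[\alpha][\beta]=[d_n\theta]$ where $\theta:\Delta^n[n+1]\to X$ is any stratified map with $d_{n-1}\theta=\alpha$, $d_{n+1}\theta=\beta$, and $d_i\theta$ constant at $x$ for $i\notin\{n-1,n,n+1\}$; this is a monoid with unit the class of the constant simplex at $x$. *)

(* Defs.v *)
From mathcomp Require Import all_boot.
Set Implicit Arguments. Unset Strict Implicit. Unset Printing Implicit Defensive.

(** * The simplex category Delta: monotone maps [m] -> [n], [m] = 'I_m.+1 *)

Definition monob m n (f : {ffun 'I_m.+1 -> 'I_n.+1}) : bool :=
  [forall i : 'I_m.+1, forall j : 'I_m.+1, (i <= j) ==> (f i <= f j)].

Lemma monoP m n (f : {ffun 'I_m.+1 -> 'I_n.+1}) :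
  reflect (forall i j : 'I_m.+1, i <= j -> f i <= f j) (monob f).
Proof.
apply: (iffP forallP) => [H i j hij | H i].
  by move: (forallP (H i) j) => /implyP; apply.
by apply/forallP => j; apply/implyP; apply: H.
Qed.

Definition Dmap m n := {f : {ffun 'I_m.+1 -> 'I_n.+1} | monob f}.

Definition dapp m n (a : Dmap m n) (i : 'I_m.+1) : 'I_n.+1 := sval a i.

Lemma did_mono n : monob [ffun i : 'I_n.+1 => i].
Proof. by apply/monoP => i j; rewrite !ffunE. Qed.
Definition did n : Dmap n n := exist (fun f => is_true (monob f)) _ (did_mono n).

Lemma dcomp_mono l m n (g : Dmap m n) (f : Dmap l m) :
  monob [ffun i => dapp g (dapp f i)].
Proof.
apply/monoP => i j hij; rewrite !ffunE /dapp.
case: g => g /= /monoP; apply; case: f => f /= /monoP; exact.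
Qed.
Definition dcomp l m n (g : Dmap m n) (f : Dmap l m) : Dmap l n :=
  exist (fun f => is_true (monob f)) _ (dcomp_mono g f).

Lemma dconst_mono m n (j : 'I_n.+1) : monob [ffun _ : 'I_m.+1 => j].
Proof. by apply/monoP => i i' _; rewrite !ffunE. Qed.
Definition dconst m n (j : 'I_n.+1) : Dmap m n := exist (fun f => is_true (monob f)) _ (dconst_mono m j).

Lemma delta_mono n (i : 'I_n.+2) : monob [ffun j : 'I_n.+1 => lift i j].
Proof. by apply/monoP => j j' h; rewrite !ffunE /= leq_bump2. Qed.
Definition delta n (i : 'I_n.+2) : Dmap n n.+1 := exist (fun f => is_true (monob f)) _ (delta_mono i).

Definition dsurj m n (a : Dmap m n) : Prop := forall j, exists i, dapp a i = j.

Lemma Dmap_eq m n (a b : Dmap m n) : (forall i, dapp a i = dapp b i) -> a = b.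
Proof. by move=> H; apply: val_inj; apply/ffunP. Qed.

Record sSet := SSet {
  sx :> nat -> Type;
  sact : forall m n, Dmap m n -> sx n -> sx m;
  sact_id : forall n (x : sx n), sact (did n) x = x;
  sact_comp : forall l m n (g : Dmap m n) (f : Dmap l m) (x : sx n),
      sact (dcomp g f) x = sact f (sact g x) }.

Arguments sact {s m n}.

Definition smap (X Y : sSet) := forall n, X n -> Y n.
Definition natural (X Y : sSet) (f : smap X Y) : Prop :=
  forall m n (b : Dmap m n) (x : X n), f m (sact b x) = sact b (f n x).

Definition face (X : sSet) n (i : nat) (x : X n.+1) : X n :=
  sact (delta (inord i)) x.

Definition cst (X : sSet) (x : X 0) m : X m := sact (dconst m ord0) x.

Definition degenerate (X : sSet) n (x : X n) : Prop :=
  exists m, m < n /\ exists (s : Dmap n m) (y : X m), x = sact s y.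

Lemma Delta_id n m (a : Dmap m n) : dcomp a (did m) = a.
Proof. by apply: Dmap_eq => i; rewrite /dapp /= !ffunE /dapp /= ?ffunE. Qed.
Lemma Delta_comp n l m k (g : Dmap m k) (f : Dmap l m) (a : Dmap k n) :
  dcomp a (dcomp g f) = dcomp (dcomp a g) f.
Proof. by apply: Dmap_eq => i; rewrite /dapp /= !ffunE /dapp /= ?ffunE. Qed.
Definition Delta (n : nat) : sSet :=
  @SSet (fun m => Dmap m n) (fun m k b a => dcomp a b)
        (fun k a => Delta_id a) (fun l m k g f a => Delta_comp g f a).

Section Prod.
Variables X Y : sSet.
Definition prod_act m n (b : Dmap m n) (p : (X n * Y n)%type) : (X m * Y m)%type :=
  (sact b p.1, sact b p.2).
Lemma prod_id n (p : (X n * Y n)%type) : prod_act (did n) p = p.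
Proof. by case: p => x y; rewrite /prod_act /= !sact_id. Qed.
Lemma prod_comp l m n (g : Dmap m n) (f : Dmap l m) (p : (X n * Y n)%type) :
  prod_act (dcomp g f) p = prod_act f (prod_act g p).
Proof. by case: p => x y; rewrite /prod_act /= !sact_comp. Qed.
Definition prodS : sSet :=
  @SSet (fun n => (X n * Y n)%type) prod_act prod_id prod_comp.
End Prod.

(** The horn Lambda^k[n] is the sub-simplicial set of Delta[n] consisting of
    the a : [m] -> [n] whose image misses some j <> k. *)
Definition in_horn n (k : 'I_n.+1) m (a : Dmap m n) : Prop :=
  exists j : 'I_n.+1, j != k /\ forall i, dapp a i != j.

Definition Kan (K : sSet) : Prop :=
  forall n (k : 'I_n.+2) (f : forall m, Dmap m n.+1 -> K m),
    (forall m l (b : Dmap l m) (a : Dmap m n.+1),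
        in_horn k a -> f l (dcomp a b) = sact b (f m a)) ->
    exists x : K n.+1, forall m (a : Dmap m n.+1), in_horn k a -> sact a x = f m a.

Record strat := Strat { ssset :> sSet; thin : forall n, ssset n -> Prop }.
Arguments thin {s n}.

Definition strat_map (A X : strat) (f : smap A X) : Prop :=
  natural f /\ forall m (a : A m), thin a -> thin (f m a).

Definition Deltas n : strat := @Strat (Delta n) (fun m (a : Dmap m n) => degenerate (X := Delta n) a).

(** Delta[n]_t : degenerate simplices and the identity of [n] are thin *)
Definition DeltaT n : strat :=
  @Strat (Delta n) (fun m (a : Dmap m n) =>
     degenerate (X := Delta n) a \/ (m = n /\ forall i : 'I_m.+1, val (dapp a i) = val i)).

Definition DeltaH n (k : nat) : strat :=
  @Strat (Delta n) (fun m (a : Dmap m n) =>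
     degenerate (X := Delta n) a \/
     forall j : 'I_n.+1, k.-1 <= j <= k.+1 -> exists i, dapp a i = j).

Definition sprod (A B : strat) : strat :=
  @Strat (prodS A B) (fun m p => thin p.1 /\ thin p.2).

Definition th0 (K : sSet) : strat := @Strat K (fun m _ => 0 < m).

Definition yon (X : sSet) n (x : X n) : smap (Delta n) X := fun m b => sact b x.

Definition rel_htpy (A X : strat) (B : forall m, A m -> Prop) (f g : smap A X) : Prop :=
  (forall m (a : A m), B m a -> f m a = g m a) /\
  exists H : smap (sprod A (DeltaT 1)) X,
    strat_map (A := sprod A (DeltaT 1)) (X := X) H /\
    (forall m (a : A m), H m (a, dconst m (@ord0 1)) = f m a) /\
    (forall m (a : A m), H m (a, dconst m (@ord_max 1)) = g m a) /\
    (forall m (a : A m) (t : Dmap m 1), B m a -> H m (a, t) = f m a).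

Definition boundary n : forall m, Deltas n m -> Prop := fun m (a : Dmap m n) => ~ dsurj a.

(** * The homotopy monoid tau_N(X, x), here for N = n+1 >= 1 *)

Definition tau_sph (X : strat) (x : X 0) n (a : X n.+1) : Prop :=
  forall m (b : Dmap m n.+1), boundary b -> sact b a = cst x m.

Definition tau_eq (X : strat) (x : X 0) n (a b : X n.+1) : Prop :=
  tau_sph x a /\ tau_sph x b /\
  rel_htpy (A := Deltas n.+1) (X := X) (@boundary n.+1) (yon a) (yon b).

(** tau_mul a b c : [a][b] = [c] *)
Definition tau_mul (X : strat) (x : X 0) n (a b c : X n.+1) : Prop :=
  tau_sph x a /\ tau_sph x b /\ tau_sph x c /\
  exists z : X n.+2,
    strat_map (A := DeltaH n.+2 n.+1) (X := X) (yon z) /\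
    face n z = a /\ face n.+2 z = b /\
    (forall i, i <= n.+2 -> i \notin [:: n; n.+1; n.+2] -> face i z = cst x n.+1) /\
    tau_eq x (face n.+1 z) c.

(** * The simplicial homotopy group pi_N(K, v) (May's combinatorial
      definition), for N = n+1 >= 1 *)

Definition pi_sph (K : sSet) (v : K 0) n (a : K n.+1) : Prop :=
  forall i, i <= n.+1 -> face i a = cst v n.

Definition pi_eq (K : sSet) (v : K 0) n (a b : K n.+1) : Prop :=
  pi_sph v a /\ pi_sph v b /\
  exists y : K n.+2, face n.+1 y = a /\ face n.+2 y = b /\
    forall i, i < n.+1 -> face i y = cst v n.+1.

Definition pi_mul (K : sSet) (v : K 0) n (a b c : K n.+1) : Prop :=
  pi_sph v a /\ pi_sph v b /\ pi_sph v c /\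
  exists z : K n.+2, face n z = a /\ face n.+2 z = b /\
    (forall i, i < n -> face i z = cst v n.+1) /\
    pi_eq v (face n.+1 z) c.

(** * Groups presented as a carrier S, an equivalence E on S and a
      multiplication relation M (M a b c  <->  [a][b] = [c]) on classes *)
Definition is_group_setoid (T : Type) (S : T -> Prop) (E : T -> T -> Prop)
    (M : T -> T -> T -> Prop) (e : T) : Prop :=
  ((forall a, S a -> E a a) /\ (forall a b, E a b -> E b a) /\
      (forall a b c, E a b -> E b c -> E a c) /\ (forall a b, E a b -> S a /\ S b)) /\
      S e /\
      (forall a b, S a -> S b -> exists c, M a b c) /\
      (forall a b c, M a b c -> [/\ S a, S b & S c]) /\
      (forall a b c a' b' c', M a b c -> E a a' -> E b b' -> E c c' -> M a' b' c') /\
      (forall a b c c', M a b c -> M a b c' -> E c c') /\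
      (forall a b c ab bc abc, M a b ab -> M ab c abc -> M b c bc -> M a bc abc) /\
      (forall a, S a -> M e a a /\ M a e a) /\
      (forall a, S a -> exists b, [/\ S b, M a b e & M b a e]).

(* Main.v *)
Require Import Defs.
From mathcomp Require Import all_boot zify.
From Stdlib Require Import FunctionalExtensionality PropExtensionality.
Set Implicit Arguments. Unset Strict Implicit. Unset Printing Implicit Defensive.


Lemma inordE n i : nat_of_ord (@inord n i) = if i < n.+1 then i else 0.
Proof.
rewrite /inord /insubd; case: insubP => [u Hu ->|/negbTE ->] //=.
by rewrite Hu.
Qed.

Lemma bumpE h i : bump h i = if h <= i then i.+1 else i.
Proof. by rewrite /bump; case: leqP => _; rewrite ?add1n ?add0n. Qed.

Lemma dapp_comp l m n (g : Dmap m n) (f : Dmap l m) i : dapp (dcomp g f) i = dapp g (dapp f i).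
Proof. by rewrite /dapp /= ffunE. Qed.
Lemma dapp_delta n (i : 'I_n.+2) k : nat_of_ord (dapp (delta i) k) = bump i k.
Proof. by rewrite /dapp /= ffunE. Qed.
Lemma dapp_did n k : dapp (did n) k = k.
Proof. by rewrite /dapp /= ffunE. Qed.
Lemma dapp_dconst m n (j : 'I_n.+1) k : dapp (dconst m j) k = j.
Proof. by rewrite /dapp /= ffunE. Qed.

Ltac arith := repeat (case: ifP => /=; rewrite ?inordE /=); lia.

Lemma test n (i j : nat) : i < j -> j <= n.+2 ->
  dcomp (delta (n:=n.+1) (inord j)) (delta (n:=n) (inord i)) =
  dcomp (delta (inord i)) (delta (inord j.-1)).
Proof.
move=> Hij Hj; apply: Dmap_eq => k; apply: ord_inj.
rewrite !dapp_comp !dapp_delta !bumpE !inordE /=.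
have := ltn_ord k.
arith.
Qed.

Lemma unbumpE h i : unbump h i = if h < i then i.-1 else i.
Proof. by rewrite /unbump; case: ltnP => _; rewrite ?subn1 ?subn0. Qed.

Ltac dmap_eq := apply: Dmap_eq => k; apply: ord_inj;
  rewrite ?dapp_comp ?dapp_did ?dapp_dconst ?dapp_delta ?dapp_comp ?dapp_delta.

Lemma sigma_mono n (i : nat) : monob [ffun k : 'I_n.+2 => (inord (if (k <= i) && (k <= n) then (k:nat) else k.-1) : 'I_n.+1)].
Proof. apply/monoP => k k' hk; rewrite !ffunE !inordE. move: hk; have := ltn_ord k; have := ltn_ord k'. arith. Qed.
Definition sigma n i : Dmap n.+1 n := exist (fun f => is_true (monob f)) _ (sigma_mono n i).
Lemma dapp_sigma n i k : nat_of_ord (dapp (sigma n i) k) = if (k <= i) && (k <= n) then (k:nat) else k.-1.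
Proof. rewrite /dapp /= ffunE inordE; have := ltn_ord k; arith. Qed.

Lemma fact_mono m n (j : nat) (a : Dmap m n.+1) : monob [ffun k : 'I_m.+1 => (inord (minn (unbump j (dapp a k)) n) : 'I_n.+1)].
Proof.
apply/monoP => k k' hk; rewrite !ffunE !inordE !unbumpE.
have : dapp a k <= dapp a k' by case: a {hk} (monoP _ (svalP a) k k' hk).
have := ltn_ord (dapp a k); have := ltn_ord (dapp a k'). arith.
Qed.
Definition fact m n j (a : Dmap m n.+1) : Dmap m n := exist (fun f => is_true (monob f)) _ (fact_mono j a).
Lemma dapp_fact m n j (a : Dmap m n.+1) k : nat_of_ord (dapp (fact j a) k) = minn (unbump j (dapp a k)) n.
Proof. by rewrite /dapp /= ffunE inordE; case: ifP => //; lia. Qed.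

Definition degen (X : sSet) n (i : nat) (x : X n) : X n.+1 := sact (sigma n i) x.

Lemma dapp_fact_gen m n j (a : Dmap m n.+1) k : dapp (fact j a) k = inord (minn (unbump j (dapp a k)) n).
Proof. by rewrite /dapp /= ffunE. Qed.

Section Simp.
Variable X : sSet.

Lemma face_face n i j (y : X n.+2) : i < j -> j <= n.+2 -> face i (face j y) = face j.-1 (face i y).
Proof.
move=> h1 h2; rewrite /face -!sact_comp; congr sact; dmap_eq.
rewrite !bumpE !inordE /=; have := ltn_ord k; arith.
Qed.

Lemma face_degen_lt n (x : X n.+1) i l : l < i -> i <= n.+1 -> face l (degen i x) = degen i.-1 (face l x).
Proof.
move=> h1 h2; rewrite /face /degen -!sact_comp; congr sact; dmap_eq.
rewrite ?dapp_sigma ?dapp_delta !bumpE ?dapp_sigma !inordE /=; have := ltn_ord k; arith.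
Qed.

Lemma face_degen_eq n (x : X n.+1) i l : (l == i) || (l == i.+1) -> i <= n.+1 -> face l (degen i x) = x.
Proof.
move=> h1 h2; rewrite /face /degen -!sact_comp -[RHS]sact_id; congr sact; dmap_eq.
rewrite ?dapp_sigma ?dapp_delta !bumpE ?dapp_sigma !inordE /=; move: h1; have := ltn_ord k; arith.
Qed.

Lemma face_degen_gt n (x : X n.+1) i l : i.+1 < l -> l <= n.+2 -> face l (degen i x) = degen i (face l.-1 x).
Proof.
move=> h1 h2; rewrite /face /degen -!sact_comp; congr sact; dmap_eq.
rewrite ?dapp_sigma ?dapp_delta !bumpE ?dapp_sigma !inordE /=; have := ltn_ord k; arith.
Qed.

Lemma sact_cst (x : X 0) m p (b : Dmap p m) : sact b (cst x m) = cst x p.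
Proof. by rewrite /cst -sact_comp; congr sact; dmap_eq. Qed.

Lemma face_cst (x : X 0) m i : face i (cst x m.+1) = cst x m.
Proof. exact: sact_cst. Qed.
Lemma degen_cst (x : X 0) m i : degen i (cst x m) = cst x m.+1.
Proof. exact: sact_cst. Qed.

Lemma miss n m (x : X n.+1) (b : Dmap m n.+1) j : j <= n.+1 ->
  (forall k, nat_of_ord (dapp b k) != j) -> sact b x = sact (fact j b) (face j x).
Proof.
move=> hj hb; rewrite /face -sact_comp; congr sact; dmap_eq.
rewrite dapp_fact !bumpE !inordE unbumpE; have := hb k; have := ltn_ord (dapp b k); arith.
Qed.

Lemma miss_cst n m (x : X n.+1) (v : X 0) (b : Dmap m n.+1) j : j <= n.+1 ->
  (forall k, nat_of_ord (dapp b k) != j) -> face j x = cst v n -> sact b x = cst v m.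
Proof. by move=> hj hb hf; rewrite (miss x hj hb) hf sact_cst. Qed.

End Simp.

Section Filler.
Variable K : sSet.
Hypothesis hK : Kan K.

Lemma filler p (h : nat) (x : nat -> K p.+1) :
  h <= p.+2 ->
  (forall i j, i < j -> j <= p.+2 -> i != h -> j != h -> face i (x j) = face j.-1 (x i)) ->
  exists y : K p.+2, forall i, i <= p.+2 -> i != h -> face i y = x i.
Proof.
move=> hh hc.
have indep : forall m (a : Dmap m p.+2) j1 j2, j1 <= p.+2 -> j2 <= p.+2 -> j1 != h -> j2 != h ->
   (forall i, nat_of_ord (dapp a i) != j1) -> (forall i, nat_of_ord (dapp a i) != j2) ->
   sact (fact j1 a) (x j1) = sact (fact j2 a) (x j2).
  move=> m a.
  suff H : forall j1 j2, j1 < j2 -> j2 <= p.+2 -> j1 != h -> j2 != h ->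
     (forall i, nat_of_ord (dapp a i) != j1) -> (forall i, nat_of_ord (dapp a i) != j2) ->
     sact (fact j1 a) (x j1) = sact (fact j2 a) (x j2).
    move=> j1 j2 h1 h2 k1 k2 m1 m2; case: (ltngtP j1 j2) => hj.
    - exact: H.
    - by apply/esym/H.
    - by rewrite hj.
  move=> j1 j2 hj h2 k1 k2 m1 m2.
  rewrite (@miss K p m (x j1) (fact j1 a) j2.-1); last 2 first.
  - lia.
  - move=> i; rewrite dapp_fact unbumpE; have := m1 i; have := m2 i; have := ltn_ord (dapp a i); arith.
  rewrite (@miss K p m (x j2) (fact j2 a) j1); last 2 first.
  - lia.
  - move=> i; rewrite dapp_fact unbumpE; have := m1 i; have := m2 i; have := ltn_ord (dapp a i); arith.
  rewrite (hc j1 j2) //; congr sact; dmap_eq.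
  rewrite !dapp_fact_gen !unbumpE.
  have := m1 k; have := m2 k; have := ltn_ord (dapp a k); arith.
pose f m (a : Dmap m p.+2) : K m :=
  match [pick j : 'I_p.+3 | (j != inord h) && [forall i, dapp a i != j]] with
  | Some j => sact (fact j a) (x j)
  | None => sact (dconst m ord0) (x 0) end.
have hkk : forall j : 'I_p.+3, (j != inord h :> 'I_p.+3) = (nat_of_ord j != h).
  move=> j; apply/idP/idP => /eqP H; apply/eqP => H'; apply: H.
    by apply: ord_inj; rewrite H' inordE; case: ifP => //; lia.
  by rewrite H' inordE; case: ifP => //; lia.
have fE : forall m (a : Dmap m p.+2) j, j <= p.+2 -> j != h -> (forall i, nat_of_ord (dapp a i) != j) ->
    f m a = sact (fact j a) (x j).
  move=> m a j hj jk ja; rewrite /f; case: pickP => [j0 /andP [h0 h1]|].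
    apply: indep => //.
    - by have := ltn_ord j0; lia.
    - by rewrite -hkk.
    - by move=> i; have := forallP h1 i; apply: contra => /eqP H; apply/eqP/ord_inj.
  move/(_ (inord j)); rewrite hkk inordE ifT; last lia.
  rewrite jk /=; move/negbT/forallPn => [i]; rewrite negbK => /eqP H.
  by have := ja i; rewrite H inordE ifT ?eqxx //; lia.
have [y hy] : exists y : K p.+2, forall m (a : Dmap m p.+2), in_horn (inord h) a -> sact a y = f m a.
  apply: hK.
  move=> m l b a [j [hj ha]].
  have hj' : nat_of_ord j != h by rewrite -hkk.
  have ha' : forall i, nat_of_ord (dapp a i) != j.
    by move=> i; have := ha i; apply: contra => /eqP H; apply/eqP/ord_inj.
  rewrite (fE _ _ j) //; last 2 first.
  - by have := ltn_ord j; lia.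
  - by move=> i; rewrite dapp_comp.
  rewrite (fE _ _ j) //; last by have := ltn_ord j; lia.
  rewrite -sact_comp; congr sact; dmap_eq; rewrite !dapp_fact.
  by rewrite dapp_comp.
exists y => i hi ik.
have hm : forall l, nat_of_ord (dapp (delta (n:=p.+1) (inord i)) l) != i.
  move=> l; rewrite dapp_delta bumpE inordE; move: hi; have := ltn_ord l; arith.
rewrite /face hy; last first.
  exists (inord i); split.
    rewrite hkk inordE ifT //; lia.
  move=> l; have := hm l; apply: contra => /eqP ->; rewrite inordE ifT //; lia.
rewrite (fE _ _ i) // -[RHS]sact_id; congr sact; dmap_eq.
rewrite dapp_fact_gen inordE dapp_delta unbumpE bumpE inordE; move: hi; have := ltn_ord k; arith.
Qed.

End Filler.


Ltac finish := repeat (case: ifP => ?); try reflexivity; try lia; exfalso; lia.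

Section Pi.
Variable K : sSet.
Variable v : K 0.
Hypothesis hK : Kan K.
Notation cs m := (cst v m).

Definition sph n (x : K n.+1) := forall i, i <= n.+1 -> face i x = cs n.

Lemma face_degen_sph n (x : K n.+1) i l : sph x -> i <= n.+1 -> l <= n.+2 ->
  face l (degen i x) = if (l == i) || (l == i.+1) then x else cs n.+1.
Proof.
move=> hx hi hl.
have [h|h] := ltnP l i.
  rewrite face_degen_lt // hx; last lia. rewrite degen_cst; finish.
have [h'|h'] := ltnP i.+1 l.
  rewrite face_degen_gt // hx; last lia. rewrite degen_cst; finish.
rewrite face_degen_eq //; [finish|lia].
Qed.

Lemma face_if n l (b : bool) (A B : K n.+1) : face l (if b then A else B) = if b then face l A else face l B.
Proof. by case: b. Qed.

Lemma face_of_face p (w : K p.+2) k l : l <= p.+1 -> k <= p.+2 ->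
  face l (face k w) = if l < k then face k.-1 (face l w) else face k (face l.+1 w).
Proof.
move=> hl hk; case: ifP => h; first by rewrite face_face.
rewrite [RHS]face_face //; lia.
Qed.

Definition R n i (x x' : K n.+1) := exists y : K n.+2, forall l, l <= n.+2 ->
  face l y = if l == i then x else if l == i.+1 then x' else cs n.+1.

Ltac fsimp := rewrite /= ?face_if ?face_cst ?degen_cst.

Lemma R_up n i (x x' : K n.+1) : sph x' -> i <= n -> R i x x' -> R i.+1 x x'.
Proof.
move=> hx' hi [y hy].
pose xs := fun j => if j == i.+1 then degen i.+1 x' else
   if j == i.+2 then y else if j == i.+3 then degen i x' else cs n.+2.
have [w hw] : exists w : K n.+3, forall j, j <= n.+3 -> j != i -> face j w = xs j.
  apply: filler => //; try lia.
  move=> a b hab hb ha hb'; rewrite /xs; fsimp.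
  rewrite ?face_degen_sph ?hy //; finish.
exists (face i w) => l hl.
rewrite face_of_face; try lia.
case: ifP => ?; rewrite hw; try lia; rewrite /xs; fsimp; rewrite ?face_degen_sph ?hy //; finish.
Qed.


Lemma R_down n i (x x' : K n.+1) : sph x -> i <= n -> R i.+1 x x' -> R i x x'.
Proof.
move=> hx hi [y hy].
pose xs := fun j => if j == i then degen i.+1 x else
   if j == i.+1 then y else if j == i.+2 then degen i x else cs n.+2.
have [w hw] : exists w : K n.+3, forall j, j <= n.+3 -> j != i.+3 -> face j w = xs j.
  apply: filler => //; try lia.
  move=> a b hab hb ha hb'; rewrite /xs; fsimp.
  rewrite ?face_degen_sph ?hy //; finish.
exists (face i.+3 w) => l hl.
rewrite face_of_face; try lia.
case: ifP => ?; rewrite hw; try lia; rewrite /xs; fsimp; rewrite ?face_degen_sph ?hy //; finish.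
Qed.

Lemma R_refl n (x : K n.+1) : sph x -> R n.+1 x x.
Proof. move=> hx; exists (degen n.+1 x) => l hl; rewrite face_degen_sph //; finish. Qed.

Lemma R_eucl n (x x' x'' : K n.+1) : R n.+1 x x' -> R n.+1 x x'' -> R n.+1 x' x''.
Proof.
move=> [y1 hy1] [y2 hy2].
pose xs := fun j => if j == n.+1 then y1 else if j == n.+2 then y2 else cs n.+2.
have [w hw] : exists w : K n.+3, forall j, j <= n.+3 -> j != n.+3 -> face j w = xs j.
  apply: filler => //.
  move=> a b hab hb ha hb'; rewrite /xs; fsimp.
  rewrite ?hy1 ?hy2 //; finish.
exists (face n.+3 w) => l hl.
rewrite face_of_face; try lia.
case: ifP => ?; rewrite hw; try lia; rewrite /xs; fsimp; rewrite ?hy1 ?hy2 //; finish.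
Qed.

Definition T n (a b c : K n.+1) := exists z : K n.+2, forall l, l <= n.+2 ->
  face l z = if l == n then a else if l == n.+1 then c else if l == n.+2 then b else cs n.+1.

Lemma T_ex n (a b : K n.+1) : sph a -> sph b -> exists c, T a b c /\ sph c.
Proof.
move=> ha hb.
pose xs := fun j => if j == n then a else if j == n.+2 then b else cs n.+1.
have [w hw] : exists w : K n.+2, forall j, j <= n.+2 -> j != n.+1 -> face j w = xs j.
  apply: filler => //.
  move=> i j hij hj hi' hj'; rewrite /xs; fsimp.
  rewrite ?ha ?hb //; finish.
exists (face n.+1 w); split.
  exists w => l hl; case: (l =P n.+1) => [->|/eqP hl']; first finish.
  rewrite hw // /xs; finish.
move=> l hl; rewrite face_of_face; try lia.
case: ifP => ?; rewrite hw; try lia; rewrite /xs; fsimp; rewrite ?ha ?hb //; finish.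
Qed.


Ltac fill3 d k A B C hA hB hC :=
  let xs := fresh "xs" in
  pose xs := fun j => if j == A.1 then A.2 else if j == B.1 then B.2 else if j == C.1 then C.2 else cst v _;
  let w := fresh "w" in let hw := fresh "hw" in
  have [w hw] : exists w : K d, forall j, j <= d -> j != k -> face j w = xs j;
  [ apply: filler => //; try lia;
    let a := fresh in let b := fresh in
    move=> a b ? ? ? ?; rewrite /xs; fsimp; rewrite ?hA ?hB ?hC //; finish
  | exists (face k w) => l hl; rewrite face_of_face; try lia;
    case: ifP => ?; rewrite hw; try lia; rewrite /xs; fsimp; rewrite ?hA ?hB ?hC //; finish ].

Lemma G_a n (a a' b c c' : K n.+1) : T a b c -> T a' b c' -> R n.+1 a a' -> R n.+1 c c'.
Proof.
move=> [z hz] [z' hz'] [y hy].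
fill3 n.+3 n.+1 (n, y) (n.+2, z) (n.+3, z') hy hz hz'.
Qed.

Lemma G_b n (a b b' c c' : K n.+1) : T a b c -> T a b' c' -> R n b b' -> R n c c'.
Proof.
move=> [z hz] [z' hz'] [y hy].
fill3 n.+3 n.+2 (n, z) (n.+1, z') (n.+3, y) hz hz' hy.
Qed.

Lemma T_assoc n (a b c ab bc abc : K n.+1) : T a b ab -> T ab c abc -> T b c bc -> T a bc abc.
Proof.
move=> [z1 h1] [z2 h2] [z3 h3].
fill3 n.+3 n.+1 (n, z1) (n.+2, z2) (n.+3, z3) h1 h2 h3.
Qed.


Lemma sph_cs n : sph (cs n.+1).
Proof. by move=> i _; rewrite face_cst. Qed.

Lemma T_idl n (a : K n.+1) : sph a -> T (cs n.+1) a a.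
Proof. move=> ha; exists (degen n.+1 a) => l hl; rewrite face_degen_sph //; finish. Qed.

Lemma T_idr n (a : K n.+1) : sph a -> T a (cs n.+1) a.
Proof. move=> ha; exists (degen n a) => l hl; rewrite face_degen_sph //; finish. Qed.

Lemma T_invr n (a : K n.+1) : sph a -> exists b, sph b /\ T a b (cs n.+1).
Proof.
move=> ha.
pose xs := fun j => if j == n then a else cs n.+1.
have [w hw] : exists w : K n.+2, forall j, j <= n.+2 -> j != n.+2 -> face j w = xs j.
  apply: filler => //.
  move=> i j hij hj hi' hj'; rewrite /xs; fsimp.
  rewrite ?ha //; finish.
exists (face n.+2 w); split.
  move=> l hl; rewrite face_of_face; try lia.
  case: ifP => ?; rewrite hw; try lia; rewrite /xs; fsimp; rewrite ?ha //; finish.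
exists w => l hl; case: (l =P n.+2) => [->|/eqP hl']; first finish.
rewrite hw // /xs; finish.
Qed.

Lemma T_invl n (a : K n.+1) : sph a -> exists b, sph b /\ T b a (cs n.+1).
Proof.
move=> ha.
pose xs := fun j => if j == n.+2 then a else cs n.+1.
have [w hw] : exists w : K n.+2, forall j, j <= n.+2 -> j != n -> face j w = xs j.
  apply: filler => //; try lia.
  move=> i j hij hj hi' hj'; rewrite /xs; fsimp.
  rewrite ?ha //; finish.
exists (face n w); split.
  move=> l hl; rewrite face_of_face; try lia.
  case: ifP => ?; rewrite hw; try lia; rewrite /xs; fsimp; rewrite ?ha //; finish.
exists w => l hl; case: (l =P n) => [->|/eqP hl']; first finish.
rewrite hw // /xs; finish.
Qed.

Definition E n (x x' : K n.+1) := sph x /\ sph x' /\ R n.+1 x x'.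
Definition M n (a b c : K n.+1) := [/\ sph a, sph b, sph c & exists c0, T a b c0 /\ E c0 c].

Lemma E_sym n (x y : K n.+1) : E x y -> E y x.
Proof. move=> [hx [hy r]]; split => //; split => //; apply: R_eucl r (R_refl hx). Qed.
Lemma E_trans n (x y z : K n.+1) : E x y -> E y z -> E x z.
Proof.
move=> e1 [_ [hz r2]]; have [hy [hx r1]] := E_sym e1.
by split => //; split => //; apply: R_eucl r1 r2.
Qed.
Lemma E_refl n (x : K n.+1) : sph x -> E x x.
Proof. by move=> hx; split => //; split => //; apply: R_refl. Qed.

Lemma E_b n (x y : K n.+1) : E x y -> R n x y.
Proof. by move=> [hx [hy r]]; apply: R_down. Qed.

Lemma pi_group n : is_group_setoid (@sph n) (@E n) (@M n) (cs n.+1).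
Proof.
split.
  split; first exact: E_refl.
  split; first exact: E_sym.
  split; first exact: E_trans.
  by move=> a b [ha [hb _]].
split; first exact: sph_cs.
split.
  move=> a b ha hb; have [c [hc sc]] := T_ex ha hb.
  by exists c; split => //; exists c; split => //; apply: E_refl.
split; first by move=> a b c [].
split.
  move=> a b c a' b' c' [ha hb hc [p [tp ep]]] ea eb ec.
  have [_ [ha' _]] := ea; have [_ [hb' _]] := eb; have [_ [hc' _]] := ec.
  have [r [tr sr]] := T_ex ha' hb.
  have [q [tq sq]] := T_ex ha' hb'.
  have rpr : R n.+1 p r by apply: G_a tp tr ea.2.2.
  have rrq : R n.+1 r q by apply: R_up => //; apply: G_b tr tq (E_b eb).
  have [sp _] := ep.
  split => //; exists q; split => //.
  apply: (E_trans _ ec); apply: (E_trans _ ep); apply: E_sym.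
  by apply: (@E_trans _ p r q); split => //; split.
split.
  move=> a b c c' [ha hb hc [p [tp ep]]] [_ _ hc' [p' [tp' ep']]].
  have [sp _] := ep; have [sp' _] := ep'.
  apply: E_trans (E_sym ep) _; apply: E_trans ep'.
  by split => //; split => //; apply: G_a tp tp' (R_refl ha).
split.
  move=> a b c ab bc abc [ha hb hab [p1 [t1 e1]]] [_ hc habc [p2 [t2 e2]]] [_ _ hbc [p3 [t3 e3]]].
  have [sp1 _] := e1; have [sp2 _] := e2; have [sp3 _] := e3.
  have [q [tq sq]] := T_ex sp1 hc.
  have r2q : E p2 q by split => //; split => //; apply: G_a t2 tq (E_sym e1).2.2.
  have tq' := T_assoc t1 tq t3.
  have [q' [tq'' sq']] := T_ex ha hbc.
  have rqq : E q q' by split => //; split => //; apply: R_up => //; apply: G_b tq' tq'' (E_b e3).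
  split => //; exists q'; split => //.
  apply: E_trans (E_sym rqq) _; apply: E_trans (E_sym r2q) e2.
split.
  move=> a ha; split.
    by split => //; [exact: sph_cs | exists a; split; [exact: T_idl | exact: E_refl]].
  by split => //; [exact: sph_cs | exists a; split; [exact: T_idr | exact: E_refl]].
move=> a ha.
have se := @sph_cs n.
have [b [hb tb]] := T_invr ha.
have [b' [hb' tb']] := T_invl ha.
have t1 : T b' (cs n.+1) b := T_assoc tb' (T_idl hb) tb.
have rbb : R n.+1 b b' := G_a t1 (T_idr hb') (R_refl hb').
have [r [tr sr]] := T_ex hb ha.
have rer : R n.+1 (cs n.+1) r := G_a tb' tr (E_sym (conj hb (conj hb' rbb))).2.2.
exists b; split => //.
  by split => //; exists (cs n.+1); split => //; apply: E_refl.
split => //.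
by exists r; split => //; apply: E_sym; split => //; split => //.
Qed.

End Pi.



Lemma theta_mono m (i : nat) : monob [ffun k : 'I_m.+1 => (inord (if k < i then 0 else 1) : 'I_2)].
Proof. apply/monoP => k k' hk; rewrite !ffunE !inordE. move: hk; arith. Qed.
Definition theta m i : Dmap m 1 := exist (fun f => is_true (monob f)) _ (theta_mono m i).
Lemma dapp_theta m i k : nat_of_ord (dapp (theta m i) k) = if k < i then 0 else 1.
Proof. rewrite /dapp /= ffunE inordE; arith. Qed.

Lemma phi_mono m n (c : Dmap m n.+1) (t : Dmap m 1) :
  monob [ffun k : 'I_m.+1 => (inord (if (nat_of_ord (dapp c k) == n.+1) && (nat_of_ord (dapp t k) == 1) then n.+2 else dapp c k) : 'I_n.+3)].
Proof.
apply/monoP => k k' hk; rewrite !ffunE !inordE.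
have : dapp c k <= dapp c k' by case: c {hk} (monoP _ (svalP c) k k' hk).
have : dapp t k <= dapp t k' by case: t {hk} (monoP _ (svalP t) k k' hk).
have := ltn_ord (dapp c k); have := ltn_ord (dapp c k'); have := ltn_ord (dapp t k); have := ltn_ord (dapp t k').
arith.
Qed.
Definition phi m n (c : Dmap m n.+1) (t : Dmap m 1) : Dmap m n.+2 := exist (fun f => is_true (monob f)) _ (phi_mono c t).
Lemma dapp_phi m n (c : Dmap m n.+1) (t : Dmap m 1) k : nat_of_ord (dapp (phi c t) k) =
  if (nat_of_ord (dapp c k) == n.+1) && (nat_of_ord (dapp t k) == 1) then n.+2 else dapp c k.
Proof. rewrite {1}/dapp /= ffunE inordE; have := ltn_ord (dapp c k); arith. Qed.

Lemma nonsurj_miss m n (b : Dmap m n) : ~ dsurj b -> exists j : 'I_n.+1, forall k, nat_of_ord (dapp b k) != j.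
Proof.
move=> hs; case: (boolP [exists j : 'I_n.+1, [forall k, dapp b k != j]]) => [/existsP [j /forallP h]|/existsPn h].
  by exists j => k; have := h k.
exfalso; apply: hs => j; have /forallPn [k] := h j; rewrite negbK => /eqP e; by exists k.
Qed.

Lemma delta_nonsurj n i : i <= n.+1 -> ~ dsurj (delta (n:=n) (inord i)).
Proof.
move=> hi hs; have [k] := hs (inord i); move/(congr1 (@nat_of_ord _)).
rewrite dapp_delta bumpE !inordE; have := ltn_ord k; arith.
Qed.

Section Prism.
Variable K : sSet.
Variable v : K 0.
Hypothesis hK : Kan K.
Notation cs m := (cst v m).

Lemma tau_sph_iff n (x : K n.+1) : tau_sph (X := th0 K) v x <-> sph v x.
Proof.
split.
  move=> h i hi; rewrite /face; apply: h; exact: delta_nonsurj.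
move=> h m b hb; have [j hj] := nonsurj_miss hb.
apply: (miss_cst (j := j)) => //; first by have := ltn_ord j; lia.
apply: h; have := ltn_ord j; lia.
Qed.


Lemma prism_from n (a b : K n.+1) : sph v a -> sph v b -> R v n.+1 b a ->
  rel_htpy (A := Deltas n.+1) (X := th0 K) (@boundary n.+1) (yon a) (yon b).
Proof.
move=> ha hb [y hy].
have ta := (tau_sph_iff a).2 ha; have tb := (tau_sph_iff b).2 hb.
have fa : face n.+2 y = a by rewrite hy //; finish.
have fb : face n.+1 y = b by rewrite hy //; finish.
split.
  by move=> m c hc; rewrite /yon ta // tb.
exists (fun m p => sact (phi p.1 p.2) y).
split; first split.
- move=> m l bb [c t] /=; rewrite -sact_comp; congr sact; dmap_eq.
  by rewrite !dapp_phi !dapp_comp.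
- by move=> m [c t] [[m' [hm _]] _] /=; lia.
split.
  move=> m c /=; rewrite /yon -fa /face -sact_comp; congr sact; dmap_eq.
  rewrite ?dapp_phi ?dapp_dconst ?dapp_delta ?bumpE ?inordE /=; have := ltn_ord (dapp c k); arith.
split.
  move=> m c /=; rewrite /yon -fb /face -sact_comp; congr sact; dmap_eq.
  rewrite ?dapp_phi ?dapp_dconst ?dapp_delta ?bumpE ?inordE /=; have := ltn_ord (dapp c k); arith.
move=> m c t hc /=; rewrite /yon (ta _ _ hc).
have [j hj] := nonsurj_miss hc.
have [ej|nj] := eqVneq (nat_of_ord j) n.+1.
  rewrite -(ta _ _ hc) -fa /face -sact_comp; congr sact; dmap_eq.
  rewrite ?dapp_phi ?dapp_delta ?bumpE ?inordE /=; have := hj k; rewrite ej.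
  have := ltn_ord (dapp c k); arith.
apply: (miss_cst (j := j)).
- by have := ltn_ord j; lia.
- move=> k; rewrite dapp_phi; have := hj k; have := ltn_ord j; move: nj; arith.
- have hj2 := ltn_ord j; rewrite hy; [finish|lia].
Qed.


Lemma miss_nonsurj m n (b : Dmap m n) (j : nat) : j <= n -> (forall k, nat_of_ord (dapp b k) != j) -> ~ dsurj b.
Proof.
move=> hj hk hs; have [k] := hs (inord j); move/(congr1 (@nat_of_ord _)); rewrite inordE.
have := hk k; case: ifP => [_ /eqP H e|]; [exact: H e | lia].
Qed.

Ltac dq := dmap_eq; rewrite ?dapp_sigma ?dapp_theta ?dapp_delta ?dapp_dconst ?dapp_did ?bumpE ?inordE /=;
  try (have := ltn_ord k); arith.

Lemma R_top n d i (x x' : K n.+1) : i + d = n.+1 -> sph v x' -> R v i x x' -> R v n.+1 x x'.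
Proof.
elim: d i => [|d IH] i hid hx' r; first by rewrite -hid addn0.
apply: (IH i.+1); [lia | done | apply: R_up => //; lia].
Qed.

Lemma prism_to n (a b : K n.+1) : sph v a -> sph v b ->
  rel_htpy (A := Deltas n.+1) (X := th0 K) (@boundary n.+1) (yon a) (yon b) -> E v a b.
Proof.
move=> ha hb [_ [H [[hnat _] [h0 [h1 hB]]]]].
have ta := (tau_sph_iff a).2 ha.
pose cc i := H n.+1 (did n.+1, theta n.+1 i).
have sc : forall i, sph v (cc i).
  move=> i l hl; rewrite /face /cc -hnat /= /prod_act /=.
  have -> : dcomp (did n.+1) (delta (n:=n) (inord l)) = delta (inord l) by dq.
  rewrite hB; last exact: delta_nonsurj.
  by rewrite /yon; apply: ha.
have c0 : cc 0 = b.
  rewrite /cc; have -> : theta n.+1 0 = dconst n.+1 ord_max by dq.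
  by rewrite h1 /yon sact_id.
have cN : cc n.+2 = a.
  rewrite /cc; have -> : theta n.+1 n.+2 = dconst n.+1 ord0 by dq.
  by rewrite h0 /yon sact_id.
have rr : forall i, i <= n.+1 -> R v i (cc i) (cc i.+1).
  move=> i hi; exists (H n.+2 (sigma n.+1 i, theta n.+2 i.+1)) => l hl.
  rewrite /face -hnat /= /prod_act /=.
  case: (l =P i) => [->|/eqP li].
    have -> : dcomp (sigma n.+1 i) (delta (n:=n.+1) (inord i)) = did n.+1 by dq.
    by have -> : dcomp (theta n.+2 i.+1) (delta (n:=n.+1) (inord i)) = theta n.+1 i by dq.
  case: (l =P i.+1) => [->|/eqP li'].
    have -> : dcomp (sigma n.+1 i) (delta (n:=n.+1) (inord i.+1)) = did n.+1 by dq.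
    by have -> : dcomp (theta n.+2 i.+1) (delta (n:=n.+1) (inord i.+1)) = theta n.+1 i.+1 by dq.
  have ns : ~ dsurj (dcomp (sigma n.+1 i) (delta (n:=n.+1) (inord l))).
    apply: (miss_nonsurj (j := if l < i then l else l.-1)); first by arith.
    move=> k; rewrite dapp_comp dapp_sigma dapp_delta bumpE inordE; have := ltn_ord k; move: li li'; arith.
  rewrite hB // /yon ta //; finish.
have ee : forall i, i <= n.+1 -> E v (cc i) (cc i.+1).
  move=> i hi; split => //; split => //; apply: (R_top (d := n.+1 - i) (i := i)); [lia | exact: sc | exact: rr].
have key : forall d, d <= n.+2 -> E v (cc (n.+2 - d)) a.
  elim=> [|d IH] hd; first by rewrite subn0 cN; apply: E_refl.
  have hh1 : n.+2 - d = (n.+2 - d.+1).+1 by lia.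
  have := ee (n.+2 - d.+1) ltac:(lia); rewrite -hh1 => e1.
  exact: E_trans e1 (IH ltac:(lia)).
by have := key n.+2 (leqnn _); rewrite subnn c0 => e; apply: E_sym e.
Qed.

End Prism.



Section Main.
Variable K : sSet.
Variable v : K 0.
Hypothesis hK : Kan K.

Lemma pi_eq_E n (a b : K n.+1) : pi_eq v a b <-> E v a b.
Proof.
split.
  move=> [ha [hb [y [y1 [y2 y3]]]]]; split => //; split => //; exists y => l hl.
  case: ifP => [/eqP -> //|/negbT ?]; case: ifP => [/eqP -> //|/negbT ?]; apply: y3; lia.
move=> [ha [hb [y hy]]]; split => //; split => //; exists y; split; first by rewrite hy //; finish.
split; first by rewrite hy //; finish.
by move=> i hi; rewrite hy; [finish|lia].
Qed.

Lemma pi_mul_M n (a b c : K n.+1) : pi_mul v a b c <-> M v a b c.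
Proof.
split.
  move=> [ha [hb [hc [z [z1 [z2 [z3 z4]]]]]]]; split => //.
  exists (face n.+1 z); split; last by apply/pi_eq_E.
  exists z => l hl; case: ifP => [/eqP -> //|/negbT ?]; case: ifP => [/eqP -> //|/negbT ?].
  case: ifP => [/eqP -> //|/negbT ?]; apply: z3; lia.
move=> [ha hb hc [c0 [[z hz] e]]]; split => //; split => //; split => //.
exists z; split; first by rewrite hz //; finish.
split; first by rewrite hz //; finish.
split; first by move=> i hi; rewrite hz; [finish|lia].
have -> : face n.+1 z = c0 by rewrite hz //; finish.
by apply/pi_eq_E.
Qed.

Lemma tau_eq_E n (a b : K n.+1) : tau_eq (X := th0 K) v a b <-> E v a b.
Proof.
split.
  move=> [ta [tb h]].
  have ha := (tau_sph_iff v a).1 ta; have hb := (tau_sph_iff v b).1 tb.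
  exact: (prism_to hK ha hb h).
move=> e; have [ha [hb _]] := e.
split; first by apply/tau_sph_iff.
split; first by apply/tau_sph_iff.
have [_ [_ r]] := E_sym hK e.
exact: (prism_from ha hb r).
Qed.

Lemma yon_strat n (z : K n.+2) : strat_map (A := DeltaH n.+2 n.+1) (X := th0 K) (yon z).
Proof.
split.
  by move=> m l b x; rewrite /yon /= sact_comp.
move=> m a [[m' [hm _]]|h] /=; first lia.
case: m a h => // a h; exfalso.
have [i1 e1] := h (inord n) ltac:(rewrite inordE; case: ifP; lia).
have [i2 e2] := h (inord n.+1) ltac:(rewrite inordE; case: ifP; lia).
have ei : i1 = i2 by apply: ord_inj; have := ltn_ord i1; have := ltn_ord i2; lia.
move: e2; rewrite -ei e1 => /(congr1 (@nat_of_ord _)); rewrite !inordE; finish.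
Qed.

Lemma tau_mul_M n (a b c : K n.+1) : tau_mul (X := th0 K) v a b c <-> M v a b c.
Proof.
rewrite -pi_mul_M; split.
  move=> [ta [tb [tc [z [_ [z1 [z2 [z3 z4]]]]]]]].
  split; first by apply/tau_sph_iff.
  split; first by apply/tau_sph_iff.
  split; first by apply/tau_sph_iff.
  exists z; split => //; split => //; split.
    move=> i hi; apply: z3; first lia.
    by rewrite !inE; apply/negP; case/or3P => /eqP; lia.
  by apply/pi_eq_E; apply/tau_eq_E.
move=> [ha [hb [hc [z [z1 [z2 [z3 z4]]]]]]].
split; first by apply/tau_sph_iff.
split; first by apply/tau_sph_iff.
split; first by apply/tau_sph_iff.
exists z; split; first exact: yon_strat.
split => //; split => //; split.
  move=> i hi; rewrite !inE => hn; apply: z3.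
  have : i != n by apply: contra hn => ->.
  have : i != n.+1 by apply: contra hn => ->; rewrite orbT.
  have : i != n.+2 by apply: contra hn => ->; rewrite !orbT.
  lia.
by apply/tau_eq_E; apply/pi_eq_E.
Qed.

End Main.

Theorem mainTheorem5 (K : sSet) (v : K 0) (n : nat) :
  Kan K ->
  is_group_setoid (tau_sph (X := th0 K) v (n := n)) (tau_eq (X := th0 K) v (n := n))
                  (tau_mul (X := th0 K) v (n := n)) (cst v n.+1) /\
  (forall a : K n.+1, tau_sph (X := th0 K) v a <-> pi_sph v a) /\
  (forall a b : K n.+1, tau_eq (X := th0 K) v a b <-> pi_eq v a b) /\
  (forall a b c : K n.+1, tau_mul (X := th0 K) v a b c <-> pi_mul v a b c).
Proof.
move=> hK.
have e1 : tau_sph (X := th0 K) v (n := n) = sph v (n := n).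
  by apply: functional_extensionality => a; apply: propositional_extensionality; apply: tau_sph_iff.
have e2 : tau_eq (X := th0 K) v (n := n) = E v (n := n).
  apply: functional_extensionality => a; apply: functional_extensionality => b.
  by apply: propositional_extensionality; apply: tau_eq_E.
have e3 : tau_mul (X := th0 K) v (n := n) = M v (n := n).
  apply: functional_extensionality => a; apply: functional_extensionality => b.
  apply: functional_extensionality => c.
  by apply: propositional_extensionality; apply: tau_mul_M.
split; first by rewrite e1 e2 e3; apply: pi_group.
split; first by move=> a; apply: tau_sph_iff.
split; first by move=> a b; rewrite tau_eq_E // -pi_eq_E.
by move=> a b c; rewrite tau_mul_M // -pi_mul_M.
Qed.
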